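(* For every $f=\sum_{n\ge0}f_n\mathtt{x}^n\in\mathbb{K}[[\mathtt{x}]]$ and every $(\mu_{+},\sigma_{+})\in\mathbb{K}[[\mathtt{x}]]^{+}\times\mathfrak{M}^{+}$, the series $\sum_{n\ge0}f_n(\mu_{+},\sigma_{+})^{\rtimes n}$ converges in $\mathbb{K}[[\mathtt{x}]]\times\mathfrak{M}$.
   Context: $\mathbb{K}$ is a field of characteristic zero (discrete topology); $\mathbb{K}[[\mathtt{x}]]$ has the $(\mathtt{x})$-adic topology given by the order valuation $\nu$ ($\nu(0)=+\infty$); $\mathfrak{M}:=\mathtt{x}\mathbb{K}[[\mathtt{x}]]$ (subspace topology); $\mathbb{K}[[\mathtt{x}]]\times\mathfrak{M}$ carries the product topology and componentwise vector space structure. $\mathbb{K}[[\mathtt{x}]]^{+}:=\mathfrak{M}$ (series with zero constant term) and $\mathfrak{M}^{+}:=\{\sigma\in\mathfrak{M}:\nu(\sigma)>1\}$. For $g=\sum g_n\mathtt{x}^n$ and $\sigma\in\mathfrak{M}$, $g\circ\sigma:=\sum g_n\sigma^n$. Product: $(\mu_1,\sigma_1)\rtimes(\mu_2,\sigma_2):=((\mu_1\circ\sigma_2)\mu_2,\sigma_1\circ\sigma_2)$; $(\mu,\sigma)^{\rtimes0}:=(1,\mathtt{x})$ and $(\mu,\sigma)^{\rtimes n}$ is the $n$-fold $\rtimes$-product. *)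

(* Defs.v *)
From mathcomp Require Import all_boot all_algebra.
Set Implicit Arguments. Unset Strict Implicit. Unset Printing Implicit Defensive.
Import GRing.Theory.
Local Open Scope ring_scope.

(* Formal power series over K, represented by their coefficient sequences:
   a series g = \sum_n g_n x^n is the function n |-> g_n. *)
Definition fps (K : fieldType) := nat -> K.

Section FPS.
Variable K : fieldType.

Definition fps_one : fps K := fun n => if n == 0%N then 1 else 0.
Definition fps_x : fps K := fun n => if n == 1%N then 1 else 0.

Definition fps_mul (a b : fps K) : fps K :=
  fun n => \sum_(i < n.+1) a i * b (n - i)%N.

Fixpoint fps_exp (a : fps K) (n : nat) : fps K :=
  if n is m.+1 then fps_mul a (fps_exp a m) else fps_one.

Definition fps_ord_gt (a : fps K) (k : nat) : Prop :=
  forall j, (j <= k)%N -> a j = 0.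

(* Since sigma^n has
   order >= n, the coefficient of x^k only receives contributions from
   n <= k, so this is the x-adic limit written out coefficientwise. *)
Definition fps_comp (g s : fps K) : fps K :=
  fun k => \sum_(n < k.+1) g n * fps_exp s n k.

Definition rtimes (p q : fps K * fps K) : fps K * fps K :=
  (fps_mul (fps_comp p.1 q.2) q.1, fps_comp p.2 q.2).

Fixpoint rtimes_pow (p : fps K * fps K) (n : nat) : fps K * fps K :=
  if n is m.+1 then rtimes p (rtimes_pow p m) else (fps_one, fps_x).

Definition rtimes_partial (f : fps K) (p : fps K * fps K) (N : nat)
  : fps K * fps K :=
  (fun k => \sum_(n < N) f n * (rtimes_pow p n).1 k,
   fun k => \sum_(n < N) f n * (rtimes_pow p n).2 k).

(* Convergence in K[[x]] x K[[x]] with the product of the x-adic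
   topologies: for every k, eventually both components agree with the
   limit in all coefficients of index <= k. *)
Definition fps2_cvg (u : nat -> fps K * fps K) (l : fps K * fps K) : Prop :=
  forall k, exists N, forall M, (N <= M)%N ->
    fps_ord_gt (fun j => (u M).1 j - l.1 j) k /\
    fps_ord_gt (fun j => (u M).2 j - l.2 j) k.

End FPS.

(* Main.v *)
Require Import Defs.
From mathcomp Require Import all_boot all_algebra.
From mathcomp Require Import zify.
Local Open Scope ring_scope.
Import GRing.Theory.

Definition ordge {K : fieldType} (a : fps K) (p : nat) : Prop :=
  forall j, (j < p)%N -> a j = 0.

Lemma ordge_mul {K : fieldType} {a b : fps K} {p q : nat} :
  ordge a p -> ordge b q -> ordge (fps_mul a b) (p + q).
Proof.
move=> ha hb j hj; rewrite /fps_mul big1 // => i _.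
have [hip|hip] := ltnP i p; first by rewrite ha // mul0r.
rewrite hb ?mulr0 //.
have := ltn_ord i; lia.
Qed.

Lemma ordge_exp {K : fieldType} (s : fps K) q n :
  ordge s q -> ordge (fps_exp s n) (q * n).
Proof.
move=> hs; elim: n => [|n IH] /=; first by move=> j; rewrite muln0.
rewrite mulnS; exact: ordge_mul.
Qed.

Lemma ordge_comp {K : fieldType} {g s : fps K} {p q : nat} :
  ordge g p -> ordge s q -> ordge (fps_comp g s) (p * q).
Proof.
move=> hg hs k hk; rewrite /fps_comp big1 // => n _.
have [hnp|hnp] := ltnP n p; first by rewrite hg // mul0r.
rewrite (@ordge_exp K s q n hs) ?mulr0 //.
apply: (leq_trans hk); rewrite mulnC leq_mul2l; lia.
Qed.

Lemma ordge_pow {K : fieldType} (mu sigma : fps K) n :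
  ordge mu 1 -> ordge sigma 2 ->
  ordge (rtimes_pow (mu, sigma) n).1 n /\
  ordge (rtimes_pow (mu, sigma) n).2 (maxn n 1).
Proof.
move=> hm hs; elim: n => [|n [IH1 IH2]] /=.
  split => j hj //; rewrite /fps_x; case: j hj => //.
split.
  have := ordge_mul (ordge_comp hm IH2) IH1.
  move=> H j hj; apply: H; rewrite mul1n; lia.
have := ordge_comp hs IH2.
move=> H j hj; apply: H; lia.
Qed.

Theorem mainTheorem9 (K : fieldType) (hK : [pchar K] =i pred0)
  (f : fps K) (mu sigma : fps K)
  (hmu : mu 0%N = 0)
  (hsigma : fps_ord_gt sigma 1) :
  exists l : fps K * fps K,
    l.2 0%N = 0 /\ fps2_cvg (rtimes_partial f (mu, sigma)) l.
Proof.
have hm : ordge mu 1 by move=> j; case: j.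
have hs : ordge sigma 2 by move=> j hj; apply: hsigma.
pose P := rtimes_partial f (mu, sigma).
exists (fun k => (P k.+1).1 k, fun k => (P k.+1).2 k); split.
  by rewrite /P /rtimes_partial /= big_ord1 /= /fps_x /= mulr0.
move=> k; exists k.+1 => M hM; split => j hj;
  rewrite /P /rtimes_partial /=;
  rewrite -(subnKC (_ : j.+1 <= M)%N); try (by apply: leq_ltn_trans hM);
  rewrite big_split_ord addrAC subrr add0r big1 // => i _;
  have [H1 H2] := @ordge_pow K mu sigma (j.+1 + i) hm hs.
- by rewrite H1 ?mulr0 // ltnS leq_addr.
- by rewrite H2 ?mulr0 // leq_max ltnS leq_addr.
Qed.
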